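(* Let $v$ be a floating-point value (zero or a normal IEEE 754 double) with $\alpha = DP(v) \le 22$ and $\beta = DS(v) \le 15$. Then $v = round(v \otimes 10^{\alpha}) \div 10^{\alpha}$, where the division is performed in IEEE 754 double-precision arithmetic; that is, this floating-point computation introduces no error and recovers exactly the double $v$.
   Context: Convention: a floating-point value $v$ is identified with the decimal number given by its decimal format $DF(v)$, i.e. its shortest decimal representation that reads back to $v$. For a nonzero terminating decimal $x$, $DP(x)$ is the least nonnegative integer $j$ with $x \times 10^j$ an integer, and $DS(x) = DP(x) + \lfloor \log_{10}|x|\rfloor + 1$; $DP(0)=DS(0)=0$. $v \otimes 10^{i}$ and $a \div 10^i$ denote multiplication and division computed in IEEE 754 double-precision arithmetic (round-to-nearest), with $10^i$ represented as a double. $round(\cdot)$ denotes rounding to the nearest integer. *)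

(* Defs.v *)
From Stdlib Require Import Reals ZArith.
Open Scope R_scope.

Definition is_int (r : R) : Prop := exists n : Z, r = IZR n.

(* floor (Stdlib: Int_part r = up r - 1 is the floor of r) *)
Definition floorZ (r : R) : Z := Int_part r.

Definition bpow (e : Z) : R := powerRZ 2 e.

Definition is_double (v : R) : Prop :=
  exists (m e : Z), v = IZR m * bpow e /\ (Z.abs m < 2 ^ 53)%Z
                    /\ (-1074 <= e <= 971)%Z.

(* zero or a normal double (signed zero identified with 0) *)
Definition zero_or_normal (v : R) : Prop :=
  v = 0 \/ (is_double v /\ bpow (-1022) <= Rabs v).

(* mag2 x = the integer k with 2^(k-1) <= |x| < 2^k  (x <> 0) *)
Definition mag2 (x : R) : Z := (floorZ (ln (Rabs x) / ln 2) + 1)%Z.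

(* canonical exponent of binary64 (precision 53, emin = -1074) *)
Definition cexp (x : R) : Z := Z.max (mag2 x - 53) (-1074).

Definition rne_int (r : R) : Z :=
  let f := floorZ r in
  let d := r - IZR f in
  if Rlt_dec d (1/2) then f
  else if Rlt_dec (1/2) d then (f + 1)%Z
  else if Z.even f then f else (f + 1)%Z.

(* IEEE 754 round-to-nearest(-even) of a real into binary64
   (overflow is not modelled; it cannot occur in the statement below) *)
Definition fl (x : R) : R :=
  if Req_EM_T x 0 then 0
  else IZR (rne_int (x * bpow (- cexp x))) * bpow (cexp x).

Definition fmul (a b : R) : R := fl (a * b).
Definition fdiv (a b : R) : R := fl (a / b).

Definition pow10d (i : nat) : R := fl (10 ^ i).

(* round(.) : nearest integer, ties away from zero (C round) *)
Definition round_int (r : R) : Z :=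
  let f := floorZ r in
  let d := r - IZR f in
  if Rlt_dec d (1/2) then f
  else if Rlt_dec (1/2) d then (f + 1)%Z
  else if Rle_dec 0 r then (f + 1)%Z else f.

Definition is_decimal (x : R) : Prop :=
  exists (n : Z) (k : nat), x = IZR n / 10 ^ k.

Definition DP_is (x : R) (j : nat) : Prop :=
  is_int (x * 10 ^ j) /\ forall i : nat, (i < j)%nat -> ~ is_int (x * 10 ^ i).

Definition flog10 (x : R) : Z := floorZ (ln (Rabs x) / ln 10).

(* DS x, given j = DP x;  DS 0 = 0 *)
Definition DS_of (x : R) (j : nat) : Z :=
  if Req_EM_T x 0 then 0%Z else (Z.of_nat j + flog10 x + 1)%Z.

(* x is the decimal format DF(v): a shortest decimal reading back to v
   (fewest significant digits DS; among those, closest to v) *)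
Definition is_DF (v x : R) : Prop :=
  is_decimal x /\ fl x = v /\
  forall (y : R) (jx jy : nat), is_decimal y -> fl y = v ->
    DP_is x jx -> DP_is y jy ->
    (DS_of x jx < DS_of y jy)%Z \/
    (DS_of x jx = DS_of y jy /\ Rabs (x - v) <= Rabs (y - v)).

(* Main.v *)
Require Import Defs.
From Stdlib Require Import Reals ZArith Lra Lia.
Open Scope R_scope.

Lemma ln2_pos : 0 < ln 2.
Proof. rewrite <- ln_1. apply ln_increasing; lra. Qed.

Lemma ln10_pos : 0 < ln 10.
Proof. rewrite <- ln_1. apply ln_increasing; lra. Qed.

Lemma bpow_exp z : bpow z = exp (IZR z * ln 2).
Proof. unfold bpow. rewrite powerRZ_Rpower by lra. reflexivity. Qed.

Lemma bpow_pos z : 0 < bpow z.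
Proof. rewrite bpow_exp. apply exp_pos. Qed.

Lemma bpow_lt_inv a b : bpow a < bpow b -> (a < b)%Z.
Proof.
  rewrite !bpow_exp. intro H. apply exp_lt_inv in H.
  apply lt_IZR. pose proof ln2_pos. nra.
Qed.

Lemma bpow_le a b : (a <= b)%Z -> bpow a <= bpow b.
Proof.
  intro H. rewrite !bpow_exp. apply IZR_le in H. pose proof ln2_pos.
  destruct (Req_dec (IZR a) (IZR b)) as [E|E].
  - rewrite E; lra.
  - left. apply exp_increasing. nra.
Qed.

Lemma bpow_plus a b : bpow (a + b) = bpow a * bpow b.
Proof. unfold bpow. apply powerRZ_add. lra. Qed.

Lemma bpow_opp a : bpow (- a) = / bpow a.
Proof. unfold bpow. apply powerRZ_neg'. Qed.

Lemma bpow_nat (n : nat) : bpow (Z.of_nat n) = 2 ^ n.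
Proof. unfold bpow. rewrite pow_powerRZ. reflexivity. Qed.

Lemma bpow_IZR z : (0 <= z)%Z -> bpow z = IZR (2 ^ z).
Proof.
  intro H. rewrite <- (Z2Nat.id z H). rewrite bpow_nat.
  rewrite pow_IZR. reflexivity.
Qed.

Lemma mag2_spec x : x <> 0 -> bpow (mag2 x - 1) <= Rabs x < bpow (mag2 x).
Proof.
  intro Hx. unfold mag2, floorZ.
  set (t := ln (Rabs x) / ln 2).
  destruct (base_Int_part t) as [H1 H2].
  set (f := Int_part t) in *.
  assert (Hax : 0 < Rabs x) by (apply Rabs_pos_lt; exact Hx).
  pose proof ln2_pos.
  assert (Ht : t * ln 2 = ln (Rabs x)) by (unfold t; field; lra).
  replace (f + 1 - 1)%Z with f by ring.
  rewrite !bpow_exp. rewrite plus_IZR.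
  rewrite <- (exp_ln (Rabs x)) by exact Hax.
  split.
  - destruct (Req_dec (IZR f) t) as [E|E].
    + rewrite E, Ht. lra.
    + left. apply exp_increasing. rewrite <- Ht. nra.
  - apply exp_increasing. rewrite <- Ht. nra.
Qed.

Lemma mag2_le x k : x <> 0 -> Rabs x < bpow k -> (mag2 x <= k)%Z.
Proof.
  intros Hx H. destruct (mag2_spec x Hx) as [H1 _].
  assert (mag2 x - 1 < k)%Z by (apply bpow_lt_inv; lra). lia.
Qed.

Lemma mag2_ge x k : x <> 0 -> bpow (k - 1) <= Rabs x -> (k <= mag2 x)%Z.
Proof.
  intros Hx H. destruct (mag2_spec x Hx) as [_ H2].
  assert (k - 1 < mag2 x)%Z by (apply bpow_lt_inv; lra). lia.
Qed.

Lemma IZR_close a b : Rabs (IZR a - IZR b) < 1 -> a = b.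
Proof.
  intro H. apply Rabs_def2 in H. destruct H as [H1 H2].
  rewrite <- minus_IZR in H1, H2.
  apply lt_IZR in H1. apply (lt_IZR (-1)) in H2. lia.
Qed.

Lemma floor_unique z r : IZR z <= r < IZR z + 1 -> floorZ r = z.
Proof.
  intro H. unfold floorZ. destruct (base_Int_part r) as [H1 H2].
  apply IZR_close. apply Rabs_def1; lra.
Qed.

Lemma floor_spec r : IZR (floorZ r) <= r < IZR (floorZ r) + 1.
Proof. unfold floorZ. destruct (base_Int_part r). lra. Qed.

Lemma rne_int_IZR z : rne_int (IZR z) = z.
Proof.
  unfold rne_int. rewrite (floor_unique z (IZR z)) by lra.
  destruct (Rlt_dec (IZR z - IZR z) (1/2)); [reflexivity|lra].
Qed.

Lemma rne_err r : Rabs (IZR (rne_int r) - r) <= 1/2.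
Proof.
  unfold rne_int. pose proof (floor_spec r). set (f := floorZ r) in *.
  destruct (Rlt_dec (r - IZR f) (1/2)).
  - apply Rabs_le; lra.
  - destruct (Rlt_dec (1/2) (r - IZR f)).
    + rewrite plus_IZR. apply Rabs_le; lra.
    + destruct (Z.even f); [|rewrite plus_IZR]; apply Rabs_le; lra.
Qed.

Lemma round_err r : Rabs (IZR (round_int r) - r) <= 1/2.
Proof.
  unfold round_int. pose proof (floor_spec r). set (f := floorZ r) in *.
  destruct (Rlt_dec (r - IZR f) (1/2)).
  - apply Rabs_le; lra.
  - destruct (Rlt_dec (1/2) (r - IZR f)).
    + rewrite plus_IZR. apply Rabs_le; lra.
    + destruct (Rle_dec 0 r); [rewrite plus_IZR|]; apply Rabs_le; lra.
Qed.

Lemma round_unique r n : Rabs (r - IZR n) < 1/2 -> round_int r = n.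
Proof.
  intro H. pose proof (round_err r). apply IZR_close.
  apply Rabs_def2 in H. apply Rabs_def1; unfold Rabs in *;
  destruct (Rcase_abs (IZR (round_int r) - r)); lra.
Qed.

Lemma fl_0 : fl 0 = 0.
Proof. unfold fl. destruct (Req_EM_T 0 0); [reflexivity|congruence]. Qed.

Lemma bpow53 : bpow 53 = 9007199254740992.
Proof. rewrite bpow_IZR by lia. reflexivity. Qed.

Lemma bpow1 : bpow 1 = 2.
Proof. rewrite bpow_IZR by lia. reflexivity. Qed.

Lemma fl_exact x m e : x = IZR m * bpow e -> (Z.abs m < 2 ^ 53)%Z -> (-1074 <= e)%Z ->
  fl x = x.
Proof.
  intros Hx Hm He. unfold fl. destruct (Req_EM_T x 0) as [E|E]; [now rewrite E|].
  assert (Hc : (cexp x <= e)%Z).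
  { unfold cexp. apply Z.max_lub; [|lia].
    assert (mag2 x <= e + 53)%Z; [|lia].
    apply mag2_le; auto. rewrite Hx, Rabs_mult, (Rabs_pos_eq (bpow e))
      by (left; apply bpow_pos).
    rewrite bpow_plus, bpow53. rewrite <- abs_IZR.
    apply IZR_lt in Hm. change (IZR (2^53)) with (IZR 9007199254740992) in Hm.
    pose proof (bpow_pos e). nra. }
  set (c := cexp x) in *.
  assert (Hr : x * bpow (- c) = IZR (m * 2 ^ (e - c))).
  { rewrite mult_IZR, <- bpow_IZR by lia. rewrite Hx, Rmult_assoc, <- bpow_plus.
    f_equal. }
  rewrite Hr, rne_int_IZR. rewrite <- Hr, Rmult_assoc, <- bpow_plus.
  replace (- c + c)%Z with 0%Z by ring. change (bpow 0) with 1. ring.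
Qed.

Lemma fl_rel x : bpow (-1022) <= Rabs x -> Rabs (fl x - x) <= Rabs x * bpow (-53).
Proof.
  intro H. pose proof (bpow_pos (-1022)).
  assert (Hx : x <> 0) by (intro E; rewrite E, Rabs_R0 in H; lra).
  unfold fl. destruct (Req_EM_T x 0) as [E|_]; [contradiction|].
  pose proof (mag2_ge x (-1021) Hx H).
  assert (Hc : cexp x = (mag2 x - 53)%Z) by (unfold cexp; lia).
  destruct (mag2_spec x Hx) as [Hm1 _].
  set (c := cexp x) in *.
  set (r := x * bpow (- c)).
  assert (Hrx : r * bpow c = x).
  { unfold r. rewrite Rmult_assoc, <- bpow_plus. replace (- c + c)%Z with 0%Z by ring.
    change (bpow 0) with 1. ring. }
  replace (IZR (rne_int r) * bpow c - x) with ((IZR (rne_int r) - r) * bpow c)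
    by (rewrite <- Hrx; ring).
  rewrite Rabs_mult, (Rabs_pos_eq (bpow c)) by (left; apply bpow_pos).
  pose proof (rne_err r).
  assert (Hb : bpow c = bpow (mag2 x - 1) * bpow (-53) * 2).
  { rewrite <- bpow1, <- !bpow_plus. f_equal. rewrite Hc. ring. }
  pose proof (bpow_pos c). pose proof (bpow_pos (-53)).
  pose proof (bpow_pos (mag2 x - 1)).
  apply Rle_trans with (1/2 * bpow c). { apply Rmult_le_compat_r; lra. }
  rewrite Hb. nra.
Qed.

Lemma pow10_exact a : (a <= 22)%nat -> pow10d a = 10 ^ a.
Proof.
  intro Ha. unfold pow10d. apply fl_exact with (5 ^ Z.of_nat a)%Z (Z.of_nat a).
  - replace 10 with (5 * 2) by ring. rewrite Rpow_mult_distr, pow_IZR, bpow_nat.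
    reflexivity.
  - rewrite Z.abs_eq by (apply Z.pow_nonneg; lia).
    apply Z.le_lt_trans with (5 ^ 22)%Z.
    + apply Z.pow_le_mono_r; lia.
    + reflexivity.
  - lia.
Qed.

Lemma ds_bound x a : x <> 0 -> (Z.of_nat a + flog10 x + 1 <= 15)%Z ->
  Rabs x * 10 ^ a < 10 ^ 15.
Proof.
  intros Hx H. unfold flog10 in H.
  pose proof (floor_spec (ln (Rabs x) / ln 10)) as [_ H2].
  set (f := floorZ _) in *.
  assert (Hf : IZR f + 1 <= 15 - INR a).
  { rewrite INR_IZR_INZ. rewrite <- minus_IZR. replace 1 with (IZR 1) by reflexivity.
    rewrite <- plus_IZR. apply IZR_le. lia. }
  pose proof ln10_pos as Hl10.
  assert (Hax : 0 < Rabs x) by (apply Rabs_pos_lt; exact Hx).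
  assert (Hl : ln (Rabs x) < (15 - INR a) * ln 10).
  { assert (ln (Rabs x) / ln 10 < 15 - INR a) by lra.
    apply (Rmult_lt_compat_r (ln 10)) in H0; auto.
    replace (ln (Rabs x)) with (ln (Rabs x) / ln 10 * ln 10) by (field; apply Rgt_not_eq; exact Hl10). lra. }
  apply ln_lt_inv.
  - apply Rmult_lt_0_compat; auto. apply pow_lt; lra.
  - apply pow_lt; lra.
  - rewrite ln_mult, !ln_pow by (try apply pow_lt; lra).
    replace (INR 15) with 15 by (simpl; ring). lra.
Qed.

Theorem theorem3 (v x : R) (alpha : nat) :
  zero_or_normal v ->
  is_DF v x ->
  DP_is x alpha ->
  (alpha <= 22)%nat ->
  (DS_of x alpha <= 15)%Z ->
  v = fdiv (IZR (round_int (fmul v (pow10d alpha)))) (pow10d alpha).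
Proof.
  intros _ [_ [Hfl _]] [[n Hn] _] Ha Hds.
  unfold fdiv, fmul. rewrite pow10_exact by exact Ha.
  set (P := 10 ^ alpha) in *.
  assert (HP : 0 < P) by (apply pow_lt; lra).
  assert (HxP : x = IZR n / P) by (rewrite <- Hn; field; lra).
  destruct (Z.eq_dec n 0) as [E|Hn0].
  - subst n. assert (x = 0) by (rewrite HxP; unfold Rdiv; ring).
    rewrite H, fl_0 in Hfl. subst v.
    rewrite Rmult_0_l, fl_0, (round_unique 0 0) by (rewrite Rminus_0_r, Rabs_R0; lra).
    unfold Rdiv. rewrite Rmult_0_l, fl_0. reflexivity.
  - assert (Hx0 : x <> 0).
    { intro E. rewrite E, Rmult_0_l in Hn. apply Hn0. apply eq_IZR. auto. }
    unfold DS_of in Hds. destruct (Req_EM_T x 0) as [E|_]; [contradiction|].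
    pose proof (ds_bound x alpha Hx0 Hds) as HB. fold P in HB.
    replace (10 ^ 15) with 1000000000000000 in HB by (simpl; ring).
    set (N := Rabs (IZR n)).
    assert (HN : N = Rabs x * P).
    { unfold N. rewrite <- Hn, Rabs_mult, (Rabs_pos_eq P) by lra. reflexivity. }
    assert (HN1 : 1 <= N).
    { unfold N. rewrite <- abs_IZR. apply IZR_le. lia. }
    assert (HP22 : P <= 10 ^ 22) by (apply Rle_pow; lra || lia).
    assert (Hsmall : bpow (-1022) <= / 10 ^ 22).
    { apply Rle_trans with (bpow (-80)).
      - apply bpow_le; lia.
      - change (-80)%Z with (- (80))%Z. rewrite (bpow_opp 80), bpow_IZR by lia. apply Rinv_le_contravar.
        + apply pow_lt; lra.
        + rewrite pow_IZR. apply IZR_le. vm_compute. discriminate. }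
    assert (Hhalf : bpow (-1022) <= / 2).
    { rewrite <- bpow1, <- bpow_opp. apply bpow_le. lia. }
    assert (Hu : bpow (-53) * 9007199254740992 = 1).
    { rewrite <- bpow53, <- bpow_plus. reflexivity. }
    set (u := bpow (-53)) in *.
    assert (Hu0 : 0 < u) by apply bpow_pos.
    assert (Hxn : bpow (-1022) <= Rabs x).
    { apply Rle_trans with (/ 10 ^ 22); auto.
      apply Rle_trans with (/ P).
      - apply Rinv_le_contravar; lra.
      - apply Rmult_le_reg_r with P; auto. rewrite Rinv_l by lra. lra. }
    pose proof (fl_rel x Hxn) as E1. rewrite Hfl in E1. fold u in E1.
    set (y := v * P).
    assert (E2 : Rabs (y - IZR n) <= N * u).
    { unfold y. rewrite <- Hn. replace (v * P - x * P) with ((v - x) * P) by ring.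
      rewrite Rabs_mult, (Rabs_pos_eq P) by lra. rewrite HN.
      replace (Rabs x * P * u) with (Rabs x * u * P) by ring.
      apply Rmult_le_compat_r; lra. }
    set (q := N * u). fold q in E2.
    assert (Hq : q < 1/8).
    { assert (q * 9007199254740992 = N) by (unfold q; rewrite Rmult_assoc, Hu; ring).
      lra. }
    assert (Hq0 : 0 <= q) by (unfold q; apply Rmult_le_pos; lra).
    assert (Hu1 : u <= 1) by lra.
    assert (Ey : N - q <= Rabs y <= N + q).
    { pose proof (Rabs_triang (y - IZR n) (IZR n)).
      pose proof (Rabs_triang (IZR n - y) y).
      pose proof E2 as E2b. rewrite Rabs_minus_sym in E2b.
      replace (y - IZR n + IZR n) with y in H by ring.
      replace (IZR n - y + y) with (IZR n) in H0 by ring. fold N in H, H0. lra. }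
    assert (Hyn : bpow (-1022) <= Rabs y) by lra.
    pose proof (fl_rel y Hyn) as E3. fold u in E3.
    assert (E4 : Rabs y * u <= (N + q) * u) by (apply Rmult_le_compat_r; lra).
    assert (E5 : q * u <= q) by nra.
    assert (Hr : Rabs (fl y - IZR n) < 1/2).
    { pose proof (Rabs_triang (fl y - y) (y - IZR n)).
      replace (fl y - y + (y - IZR n)) with (fl y - IZR n) in H by ring.
      assert ((N + q) * u = q + q * u) by (unfold q; ring). lra. }
    rewrite (round_unique _ _ Hr). rewrite <- HxP. symmetry. exact Hfl.
Qed.
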